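(* Let $F$ be a field, $n\ge 1$, and let $T\subseteq GL_n(F)$ be a split (not necessarily maximal) torus acting on $M_n(F)$ by conjugation $a\mapsto \tau a\tau^{-1}$. Let $X(T)$ be its character group (written additively, identity $0$), $W(T,M_n)\subseteq X(T)$ the set of weights of this action, $M_\omega$ the weight space of $\omega\in W(T,M_n)$ (so $M_n(F)=\bigoplus_{\omega\in W(T,M_n)}M_\omega$ and $M_0=\{a\in M_n(F):\tau a\tau^{-1}=a\ \forall \tau\in T\}$ is the centralizer of $T$), and $\pi_\omega:M_n(F)\to M_\omega$ the corresponding projections. Let $f:X(T)\otimes_{\mathbb Z}\mathbb Q\to\mathbb Q$ be a $\mathbb Q$-linear functional with $f(\omega)\ne 0$ for all $0\ne\omega\in W(T,M_n)$, and put $W_f^+=\{\omega\in W(T,M_n): f(\omega)>0\}$. Let $\Lambda\in T$ be such that $\mathrm{Tr}(\Lambda e)\neq 0$ for every nonzero idempotent $e\in M_0$. Let $V$ be an $F$-subspace of $M_n(F)$ such that both $V$ and $\pi_0(V)$ are contained in $\Lambda^\perp=\{b\in M_n(F):\mathrm{Tr}(\Lambda b)=0\}$, and such that $\pi_\omega(V)\,\pi_{-\omega'}(V)=0$ for all $\omega,\omega'\in W_f^+$ (i.e. $xy=0$ for all $x\in\pi_\omega(V)$, $y\in \pi_{-\omega'}(V)$). Then $V$ is a Mathieu subspace of $M_n(F)$.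
   Context: Let $\mathcal A$ be an associative algebra over a field $F$. An $F$-subspace $M\subseteq\mathcal A$ is a Mathieu subspace (MS) of $\mathcal A$ if for all $a,b,c\in\mathcal A$ such that $a^m\in M$ for all $m\ge 1$, there exists $N$ (depending on $a,b,c$) such that $ba^mc\in M$ for all $m\ge N$. An idempotent is an element $e$ with $e^2=e$. For a subset $S\subseteq M_n(F)$, $S^\perp=\{b\in M_n(F):\mathrm{Tr}(bx)=0 \text{ for all } x\in S\}$. The weights of the conjugation action of a split torus on $M_n(F)$ form a set closed under $\omega\mapsto-\omega$. *)

(* Defs.v *)
From HB Require Import structures.
From mathcomp Require Import all_boot all_order all_algebra.
Set Implicit Arguments. Unset Strict Implicit. Unset Printing Implicit Defensive.
Import Order.TTheory GRing.Theory Num.Theory.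
Local Open Scope ring_scope.

Definition mathieu_subspace (R : pzRingType) (M : R -> Prop) : Prop :=
  forall a b c : R, (forall m : nat, (0 < m)%N -> M (a ^+ m)) ->
  exists N : nat, forall m : nat, (N <= m)%N -> M (b * a ^+ m * c).

(* A split torus T of GL_n(F) is given by P (invertible) and an integer
   matrix A (n x r) with A^T : Z^n -> Z^r surjective: T = { P diag(t^{A_i}) P^-1 }.
   Then X(T) = Z^r, and the weight of P E_ij P^-1 is row i A - row j A. *)

Definition torus_elt (F : fieldType) (n r : nat) (P : 'M[F]_n)
  (A : 'M[int]_(n, r)) (t : 'rV[F]_r) : 'M[F]_n :=
  P *m diag_mx (\row_i \prod_(j < r) (t 0 j) ^ (A i j)) *m invmx P.

Definition is_weight (n r : nat) (A : 'M[int]_(n, r)) (w : 'rV[int]_r) : Prop :=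
  exists i j : 'I_n, w = row i A - row j A.

Definition wproj (F : fieldType) (n r : nat) (P : 'M[F]_n)
  (A : 'M[int]_(n, r)) (w : 'rV[int]_r) (a : 'M[F]_n) : 'M[F]_n :=
  P *m (\matrix_(i, j) (if row i A - row j A == w
                        then (invmx P *m a *m P) i j else 0)) *m invmx P.

(* the Q-linear functional f on X(T) (x) Q = Q^r, given by a vector c *)
Definition fval (r : nat) (c : 'rV[rat]_r) (w : 'rV[int]_r) : rat :=
  \sum_(j < r) c 0 j * (w 0 j)%:~R.

Definition Wplus (n r : nat) (A : 'M[int]_(n, r)) (c : 'rV[rat]_r)
  (w : 'rV[int]_r) : Prop := is_weight A w /\ 0 < fval c w.

(* Main.v *)
Require Import Defs.
From HB Require Import structures.
From mathcomp Require Import all_boot all_order all_algebra.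
From mathcomp Require Import ring zify.
Import Order.TTheory GRing.Theory Num.Theory.
Local Open Scope ring_scope.
Set Implicit Arguments. Unset Strict Implicit.

Lemma tr_sqr0_aux (F : fieldType) (m : nat) (L Q U : 'M[F]_m) :
  L \in unitmx -> U \in unitmx -> Q *m Q = Q ->
  (L *m Q *m U) *m (L *m Q *m U) = 0 -> \tr (L *m Q *m U) = 0.
Proof.
move=> hL hU hQ MM.
have h0 : Q *m (U *m L) *m Q = 0.
  have : invmx L *m ((L *m Q *m U) *m (L *m Q *m U)) *m invmx U = 0.
    by rewrite MM mulmx0 mul0mx.
  by rewrite !mulmxA mulVmx // mul1mx -!mulmxA mulmxV // mulmx1 !mulmxA.
rewrite mxtrace_mulC.
have -> : U *m (L *m Q) = (U *m L *m Q) *m Q by rewrite -!mulmxA hQ.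
by rewrite mxtrace_mulC !mulmxA -(mulmxA Q U L) h0 mxtrace0.
Qed.

Lemma tr_sqr0 (F : fieldType) (m : nat) (M : 'M[F]_m) : M *m M = 0 -> \tr M = 0.
Proof.
rewrite -(mulmx_ebase M); apply: tr_sqr0_aux.
- exact: col_ebase_unit.
- exact: row_ebase_unit.
- by rewrite pid_mx_id // rank_leq_col.
Qed.

Lemma poly_factX (F : fieldType) (p : {poly F}) : p != 0 ->
  exists k (q : {poly F}), p = q * 'X^k /\ ~~ root q 0.
Proof.
move: {2}(size p) (leqnn (size p)) => s; elim: s p => [|s IH] p hs p0.
  by move: hs; rewrite leqn0 size_poly_eq0 (negPf p0).
have [/factor_theorem [q hq]|nr] := boolP (root p 0); last first.
  by exists 0%N, p; rewrite expr0 mulr1.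
rewrite subr0 in hq.
have q0 : q != 0 by apply: contraNneq p0 => q0; rewrite hq q0 mul0r.
have hsq : (size q <= s)%N by move: hs; rewrite hq size_mulX.
have [k [q' [eq hr]]] := IH q hsq q0.
by exists k.+1, q'; rewrite hq eq exprS (mulrC 'X) mulrA.
Qed.

Lemma hornerXN_in (F : fieldType) (n : nat) (V : {vspace 'M[F]_n.+1}) (a : 'M[F]_n.+1) :
  (forall m, (0 < m)%N -> a ^+ m \in V) ->
  forall (p : {poly F}) N, (0 < N)%N -> horner_mx a (p * 'X^N) \in V.
Proof.
move=> hV; elim/poly_ind => [|p x IH] N hN.
  by rewrite mul0r rmorph0 mem0v.
rewrite mulrDl -mulrA -exprS mul_polyC rmorphD /=.
rewrite memvD // ?IH // horner_mxZ memvZ //.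
by rewrite rmorphXn /= horner_mx_X hV.
Qed.

Lemma nil_or_idem (F : fieldType) (n : nat) (V : {vspace 'M[F]_n.+1}) (a : 'M[F]_n.+1) :
  (forall m, (0 < m)%N -> a ^+ m \in V) ->
  exists N, exists e, e \in V /\ e * e = e /\ (e = 0 -> a ^+ N = 0).
Proof.
move=> hV.
have chi0 : char_poly a != 0 by apply: monic_neq0; apply: char_poly_monic.
have [k [g [hchi hg]]] := poly_factX chi0.
have cop : coprimep ('X^(k.+1)) g.
  by rewrite coprimep_sym; apply: (coprimep_expr k.+1); rewrite coprimepX.
have [[u v] /= huv] := Bezout_eq1_coprimepP _ _ cop.
have CH := Cayley_Hamilton a.
have hz : forall p : {poly F}, horner_mx a (p * char_poly a) = 0.
  by move=> p; rewrite rmorphM /= CH mulr0.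
exists k.+1, (horner_mx a (u * 'X^(k.+1))); split; first exact: hornerXN_in.
split.
  apply/eqP; rewrite -subr_eq0 -rmorphM -rmorphB /=.
  have -> : u * 'X^(k.+1) * (u * 'X^(k.+1)) - u * 'X^(k.+1) = - ((u * v * 'X) * char_poly a).
    rewrite hchi exprSr.
    have -> : u * ('X^k * 'X) * (u * ('X^k * 'X)) - u * ('X^k * 'X) =
       - (u * ('X^k * 'X)) * (1 - u * ('X^k * 'X)) by ring.
    rewrite -huv exprSr; ring.
  by rewrite rmorphN /= hz oppr0.
move=> e0.
have : horner_mx a ('X^(k.+1) * (u * 'X^(k.+1) + v * g)) = 0.
  have -> : 'X^(k.+1) * (u * 'X^(k.+1) + v * g) =
     'X^(k.+1) * (u * 'X^(k.+1)) + (v * 'X) * char_poly a.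
    by rewrite hchi exprSr; ring.
  by rewrite rmorphD /= hz addr0 rmorphM /= e0 mulr0.
by rewrite huv mulr1 rmorphXn /= horner_mx_X.
Qed.

Section Weights.
Variables (F : fieldType) (n r : nat) (A : 'M[int]_(n.+1, r)) (c : 'rV[rat]_r).
Hypothesis hf : forall w, is_weight A w -> w != 0 -> fval c w != 0.

Definition gg (i : 'I_n.+1) := fval c (row i A).

Lemma fvalB w1 w2 : fval c (w1 - w2) = fval c w1 - fval c w2.
Proof.
rewrite /fval -sumrB; apply: eq_bigr => j _; rewrite !mxE.
by rewrite rmorphB /= mulrBr.
Qed.

Lemma rowg i j : (row i A == row j A) = (gg i == gg j).
Proof.
apply/eqP/eqP => [e|h]; first by rewrite /gg e.
apply/eqP; rewrite -subr_eq0.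
apply/negPn/negP => hne.
have := hf (ex_intro _ i (ex_intro _ j erefl)) hne.
by rewrite fvalB -/(gg i) -/(gg j) h subrr eqxx.
Qed.

Lemma Wplus_lt i k : gg k < gg i -> Wplus A c (row i A - row k A).
Proof. by move=> h; split; [exists i, k | rewrite fvalB subr_gt0]. Qed.

Definition msk w (X : 'M[F]_n.+1) : 'M[F]_n.+1 :=
  \matrix_(i, j) (if row i A - row j A == w then X i j else 0).

Lemma msk0E X i j : msk 0 X i j = if row i A == row j A then X i j else 0.
Proof. by rewrite mxE subr_eq0. Qed.

Lemma tri3 (l j : 'I_n.+1) (x : F) :
  x = (if row l A == row j A then x else 0) + (if gg l < gg j then x else 0)
      + (if gg j < gg l then x else 0).
Proof. by rewrite rowg; case: ltgtP; rewrite ?addr0 ?add0r. Qed.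

Section Idem.
Variable E : 'M[F]_n.+1.
Hypothesis HE : E *m E = E.
Hypothesis HT : forall w w', Wplus A c w -> Wplus A c w' ->
  msk w E *m msk (- w') E = 0.

Lemma triple i j k : gg k < gg i -> gg k < gg j ->
  \sum_(l | row l A == row k A) E i l * E l j = 0.
Proof.
move=> hi hj; have := congr1 (fun M : 'M[F]_n.+1 => M i j) (HT (Wplus_lt hi) (Wplus_lt hj)).
rewrite mxE [in RHS]mxE => H; rewrite -[in RHS]H.
rewrite [LHS]big_mkcond /=; apply: eq_bigr => l _.
rewrite !mxE.
have -> : (row i A - row l A == row i A - row k A) = (row l A == row k A).
  by rewrite (inj_eq (addrI _)) (inj_eq oppr_inj).
case: (eqVneq (row l A) (row k A)) => [hl|hl]; last by rewrite mul0r.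
by rewrite hl opprB eqxx.
Qed.

Lemma Hbelow i j : \sum_(l | (gg l < gg i) && (gg l < gg j)) E i l * E l j = 0.
Proof.
suff H : forall S : {set 'I_n.+1},
    (forall l, l \in S -> (gg l < gg i) && (gg l < gg j)) ->
    (forall l l', l \in S -> row l' A = row l A -> l' \in S) ->
    \sum_(l in S) E i l * E l j = 0.
  rewrite (eq_bigl (fun l => l \in [set l | (gg l < gg i) && (gg l < gg j)])); last first.
    by move=> l; rewrite inE.
  apply: H.
  - by move=> l; rewrite inE.
  - move=> l l'; rewrite !inE => hl e.
    by have := rowg l' l; rewrite e eqxx => /esym/eqP ->.
move=> S; move: {2}#|S| (leqnn #|S|) => m; elim: m S => [|m IH] S hS hb hc.
  have : S = set0 by apply/eqP; rewrite -cards_eq0 -leqn0.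
  by move=> ->; rewrite big_set0.
case: (set_0Vmem S) => [->|[k kS]]; first by rewrite big_set0.
rewrite (bigID (fun l => row l A == row k A)) /=.
have [hki hkj] := andP (hb k kS).
rewrite (eq_bigl (fun l => row l A == row k A)); last first.
  move=> l; case: (eqVneq (row l A) (row k A)) => h; rewrite ?andbF ?andbT //.
  exact: hc h.
rewrite triple // add0r.
set S' := [set l in S | row l A != row k A].
rewrite (eq_bigl (fun l => l \in S')); last by move=> l; rewrite inE.
apply: IH.
- have : (#|S'| < #|S|)%N.
    apply: proper_card; apply/properP; split.
      by apply/subsetP => l; rewrite inE => /andP [].
    by exists k => //; rewrite inE eqxx andbF.
  by move=> h; rewrite -ltnS (leq_trans h hS).
- by move=> l; rewrite inE => /andP [h _]; apply: hb.
- move=> l l'; rewrite !inE => /andP [lS ln] e.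
  by rewrite (hc _ _ lS e) e ln.
Qed.


Definition Nm : 'M[F]_n.+1 := \matrix_(i, j)
  (if row i A == row j A then \sum_(l | gg i < gg l) E i l * E l j else 0).

Lemma d_sub : msk 0 E - msk 0 E *m msk 0 E = Nm.
Proof.
apply/matrixP => i j; rewrite !mxE subr_eq0.
case: (eqVneq (row i A) (row j A)) => hij; last first.
  rewrite big1 ?subr0 // => l _; rewrite !msk0E.
  case: (eqVneq (row i A) (row l A)) => h1; last by rewrite mul0r.
  by case: (eqVneq (row l A) (row j A)) => h2; [rewrite -h2 h1 eqxx in hij | rewrite mulr0].
have gij : gg i = gg j by apply/eqP; rewrite -rowg hij.
rewrite -{1}HE mxE (eq_bigr _ (fun l _ => tri3 l i (E i l * E l j))) !big_split /=.
rewrite -!big_mkcond /= gij.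
rewrite [X in _ + X + _ - _ = _](_ : _ = 0) ?addr0; last first.
  by apply: (etrans _ (Hbelow i j)); apply: eq_bigl => l; rewrite gij andbb.
have -> : \sum_j0 msk 0 E i j0 * msk 0 E j0 j = \sum_(i0 | row i0 A == row i A) E i i0 * E i0 j.
  rewrite [RHS]big_mkcond; apply: eq_bigr => l _; rewrite !msk0E.
  case: (eqVneq (row l A) (row i A)) => h; first by rewrite h hij !eqxx.
  by rewrite mul0r.
by rewrite addrC addKr.
Qed.

Lemma Nm2 : Nm *m Nm = 0.
Proof.
apply/matrixP => i j; rewrite !mxE.
case: (eqVneq (row i A) (row j A)) => hij; last first.
  apply: big1 => k _; rewrite !mxE.
  case: (eqVneq (row i A) (row k A)) => h1; last by rewrite mul0r.
  by case: (eqVneq (row k A) (row j A)) => h2; [rewrite -h2 h1 eqxx in hij | rewrite mulr0].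
transitivity (\sum_(k | row k A == row i A) \sum_(l | gg i < gg l)
   \sum_(l' | gg i < gg l') (E i l * E l k * (E k l' * E l' j))).
  rewrite [RHS]big_mkcond; apply: eq_bigr => k _; rewrite !mxE.
  case: (eqVneq (row k A) (row i A)) => hk; last first.
    by rewrite mul0r.
  have gk : gg k = gg i by apply/eqP; rewrite -rowg hk.
  rewrite hk hij eqxx big_distrl /=; apply: eq_bigr => l _.
  by rewrite big_distrr /= gk.
rewrite exchange_big /=; apply: big1 => l hl.
rewrite exchange_big /=; apply: big1 => l' hl'.
rewrite (eq_bigr (fun k => E i l * (E l k * E k l') * E l' j)); last first.
  by move=> k _; rewrite !mulrA.
by rewrite -big_distrl -big_distrr /= triple // mulr0 mul0r.
Qed.

Definition rho (i : 'I_n.+1) := #|[set l | gg i < gg l]|.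

Lemma rho_lt i l : gg i < gg l -> (rho l < rho i)%N.
Proof.
move=> h; apply: proper_card; apply/properP; split.
  by apply/subsetP => k; rewrite !inE => /(lt_trans h).
by exists l; rewrite !inE ?h ?ltxx.
Qed.

Lemma rho_ltg i l : (rho l < rho i)%N -> gg i < gg l.
Proof.
case: (ltgtP (gg i) (gg l)) => // h hr.
  by have := rho_lt h; rewrite ltnNge ltnW.
by move: hr; rewrite /rho h ltnn.
Qed.

Lemma rho_eqg i l : rho i = rho l -> gg i = gg l.
Proof.
case: (ltgtP (gg i) (gg l)) => // h hr.
  by have := rho_lt h; rewrite hr ltnn.
by have := rho_lt h; rewrite hr ltnn.
Qed.

Lemma rho_bd i : (rho i < n.+2)%N.
Proof. by rewrite ltnS /rho (leq_trans (max_card _)) // card_ord. Qed.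

Definition mu i j := (minn (rho i) (rho j) * n.+2 + maxn (rho i) (rho j))%N.

Section Step.
Variable m : nat.
Hypothesis IH : forall i j, (mu i j < m)%N -> E i j = 0.

Lemma stepL i j : mu i j = m -> (rho i < rho j)%N -> E i j = (E *m msk 0 E) i j.
Proof.
move=> hm hij; have gji : gg j < gg i by apply: rho_ltg.
rewrite -{1}HE !mxE (eq_bigr _ (fun l _ => tri3 l j (E i l * E l j))) !big_split /=.
rewrite [X in _ + X + _](_ : _ = 0); last first.
  apply: (etrans _ (Hbelow i j)); rewrite big_mkcond [RHS]big_mkcond.
  apply: eq_bigr => l _; case: (ltP (gg l) (gg j)) => h.
    by rewrite (lt_trans h gji).
  by rewrite andbF.
rewrite [X in _ + X](_ : _ = 0); last first.
  apply: big1 => l _; case: ifP => // h; rewrite (IH (i := i) (j := l)) ?mul0r //.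
  have := rho_lt h; have := rho_bd i; move: hm; rewrite /mu => hm hb hl.
  nia.
rewrite addr0 addr0; apply: eq_bigr => l _; rewrite msk0E.
by case: ifP => _; rewrite ?mulr0.
Qed.

Lemma stepR i j : mu i j = m -> (rho j < rho i)%N -> E i j = (msk 0 E *m E) i j.
Proof.
move=> hm hij; have gij : gg i < gg j by apply: rho_ltg.
rewrite -{1}HE !mxE (eq_bigr _ (fun l _ => tri3 l i (E i l * E l j))) !big_split /=.
rewrite [X in _ + X + _](_ : _ = 0); last first.
  apply: (etrans _ (Hbelow i j)); rewrite big_mkcond [RHS]big_mkcond.
  apply: eq_bigr => l _; case: (ltP (gg l) (gg i)) => h.
    by rewrite (lt_trans h gij).
  by [].
rewrite [X in _ + X](_ : _ = 0); last first.
  apply: big1 => l _; case: ifP => // h; rewrite (IH (i := l) (j := j)) ?mulr0 //.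
  have := rho_lt h; have := rho_bd j; move: hm; rewrite /mu => hm hb hl.
  nia.
rewrite addr0 addr0; apply: eq_bigr => l _; rewrite msk0E eq_sym.
by case: ifP => _; rewrite ?mul0r.
Qed.

Lemma stepD i j : mu i j = m -> rho i = rho j -> E i j = (msk 0 E *m msk 0 E) i j.
Proof.
move=> hm hij; have gij : gg i = gg j by apply: rho_eqg.
rewrite -{1}HE !mxE (eq_bigr _ (fun l _ => tri3 l i (E i l * E l j))) !big_split /=.
rewrite [X in _ + X + _](_ : _ = 0); last first.
  apply: (etrans _ (Hbelow i j)); rewrite big_mkcond [RHS]big_mkcond.
  by apply: eq_bigr => l _; rewrite -gij andbb.
rewrite [X in _ + X](_ : _ = 0); last first.
  apply: big1 => l _; case: ifP => // h; rewrite (IH (i := i) (j := l)) ?mul0r //.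
  have := rho_lt h; have := rho_bd i; move: hm; rewrite /mu => hm hb hl.
  nia.
rewrite addr0 addr0; apply: eq_bigr => l _; rewrite !msk0E.
have hrow : row i A = row j A by apply/eqP; rewrite rowg gij.
rewrite -hrow; case: (eqVneq (row l A) (row i A)) => h.
  by [].
by rewrite mul0r.
Qed.

End Step.

Lemma E0 : msk 0 E *m msk 0 E = 0 -> E = 0.
Proof.
move=> dd.
suff H : forall m i j, (mu i j < m)%N -> E i j = 0.
  by apply/matrixP => i j; rewrite mxE (H (mu i j).+1).
elim=> [//|m IH] i j; rewrite ltnS leq_eqVlt => /orP [/eqP hm|]; last exact: IH.
case: (ltngtP (rho i) (rho j)) => h.
- rewrite (stepL IH hm h) mxE.
  transitivity (\sum_l (E *m msk 0 E) i l * msk 0 E l j).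
    apply: eq_bigr => l _; rewrite msk0E.
    case: (eqVneq (row l A) (row j A)) => e; last by rewrite !mulr0.
    have rl : rho l = rho j by rewrite /rho; have := rowg l j; rewrite e eqxx => /esym/eqP ->.
    rewrite -(stepL IH (i := i) (j := l)) ?rl //.
    by move: hm; rewrite /mu rl.
  transitivity ((E *m msk 0 E *m msk 0 E) i j); first by rewrite [RHS]mxE.
  by rewrite -mulmxA dd mulmx0 mxE.
- rewrite (stepR IH hm h) mxE.
  transitivity (\sum_l msk 0 E i l * (msk 0 E *m E) l j).
    apply: eq_bigr => l _; rewrite msk0E.
    case: (eqVneq (row i A) (row l A)) => e; last by rewrite !mul0r.
    have rl : rho l = rho i by rewrite /rho; have := rowg l i; rewrite e eqxx => /esym/eqP ->.
    rewrite -(stepR IH (i := l) (j := j)) ?rl //.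
    by move: hm; rewrite /mu rl.
  transitivity ((msk 0 E *m (msk 0 E *m E)) i j); first by rewrite [RHS]mxE.
  by rewrite mulmxA dd mul0mx mxE.
- by rewrite (stepD IH hm h) dd mxE.
Qed.

End Idem.
Definition bd (X : 'M[F]_n.+1) := forall i j, row i A != row j A -> X i j = 0.

Lemma bd_msk0 X : bd (msk 0 X).
Proof. by move=> i j h; rewrite msk0E (negPf h). Qed.

Lemma bd_mskK X : bd X -> msk 0 X = X.
Proof.
move=> h; apply/matrixP => i j; rewrite msk0E.
by case: (eqVneq (row i A) (row j A)) => // e; rewrite h.
Qed.

Lemma bd_mul X Y : bd X -> bd Y -> bd (X * Y).
Proof.
move=> hX hY i j h; rewrite -mulmxE mxE; apply: big1 => l _.
case: (eqVneq (row i A) (row l A)) => h1; last by rewrite hX // mul0r.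
by rewrite hY ?mulr0 // -h1.
Qed.

Lemma bd_add X Y : bd X -> bd Y -> bd (X + Y).
Proof. by move=> hX hY i j h; rewrite mxE hX ?hY ?addr0. Qed.

Lemma bd_opp X : bd X -> bd (- X).
Proof. by move=> hX i j h; rewrite mxE hX ?oppr0. Qed.

Lemma bd_scal a : bd a%:M.
Proof.
move=> i j h; rewrite mxE; case: (eqVneq i j) => [e|]; last by rewrite mulr0n.
by rewrite e eqxx in h.
Qed.

Lemma bd_horner X p : bd X -> bd (horner_mx X p).
Proof.
move=> hX; elim/poly_ind: p => [|p a IH].
  by rewrite rmorph0 => i j _; rewrite mxE.
rewrite rmorphD rmorphM /= horner_mx_X horner_mx_C.
by apply: bd_add; [apply: bd_mul | apply: bd_scal].
Qed.

Lemma coordB (E Dl : 'M[F]_n.+1) : E *m E = E ->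
  (forall w w', Wplus A c w -> Wplus A c w' -> msk w E *m msk (- w') E = 0) ->
  (forall X, bd X -> Dl *m X = X *m Dl) ->
  \tr (Dl *m msk 0 E) = 0 ->
  (forall X, bd X -> X *m X = X -> X != 0 -> \tr (Dl *m X) != 0) ->
  E = 0.
Proof.
move=> HE HT hDl htr hL.
apply: (E0 HE HT).
have a2 := Nm2 HT; rewrite -(d_sub HE HT) in a2.
have bdd : bd (msk 0 E) by apply: bd_msk0.
move: htr a2 bdd; rewrite !mulmxE.
set d := msk 0 E => htr a2 bdd.
set a := d - d * d in a2 *.
have bda : bd a by apply: bd_add => //; apply: bd_opp; apply: bd_mul.
set Y : 'M[F]_n.+1 := 1 - d *+ 2.
have comm_da : d * a = a * d by rewrite /a mulrBr mulrBl !mulrA.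
have comm_Ya : Y * a = a * Y.
  by apply/esym; apply: commrB; [exact: commr1 | apply: commrMn; exact/esym].
pose pa : {poly F} := 'X - 'X^2.
pose pe : {poly F} := 'X - (1 - 'X *+ 2) * pa.
have ha : horner_mx d pa = a by rewrite /pa rmorphB /= rmorphXn /= horner_mx_X expr2.
have he : horner_mx d pe = d - Y * a.
  by rewrite /pe rmorphB rmorphM rmorphB rmorph1 rmorphMn /= horner_mx_X ha.
have eps_idem : (d - Y * a) * (d - Y * a) = d - Y * a.
  apply/eqP; rewrite -subr_eq0 -he -rmorphM -rmorphB.
  have -> : pe * pe - pe = pa * pa * (- (pa *+ 4) - 3%:R) by rewrite /pe /pa; ring.
  by rewrite rmorphM rmorphM /= ha a2 mul0r.
have bde : bd (d - Y * a) by rewrite -he; apply: bd_horner.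
have tr0 : \tr (Dl * (Y * a)) = 0.
  apply: tr_sqr0; rewrite !mulmxE.
  have hDa : Dl * a = a * Dl by rewrite -!mulmxE hDl.
  have -> : Dl * (Y * a) * (Dl * (Y * a)) = Dl * Y * (a * Dl) * (Y * a) by rewrite !mulrA.
  have -> : Dl * Y * (a * Dl) * (Y * a) = Dl * Y * Dl * (a * Y) * a by rewrite -hDa !mulrA.
  have -> : Dl * Y * Dl * (a * Y) * a = Dl * Y * Dl * Y * (a * a) by rewrite -comm_Ya !mulrA.
  by rewrite a2 mulr0.
have eps0 : d - Y * a = 0.
  apply/eqP; apply: contraT => hne.
  have hi : (d - Y * a) *m (d - Y * a) = d - Y * a by rewrite mulmxE.
  have := hL _ bde hi hne.
  by rewrite mulmxE mulrBr raddfB /= htr tr0 subr0 eqxx.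
have dY : d = Y * a by apply/eqP; rewrite -subr_eq0 eps0.
by rewrite {1}dY dY -mulrA (mulrA a) -comm_Ya -(mulrA Y) a2 !mulr0.
Qed.

End Weights.

Section Conj.
Variables (F : fieldType) (m : nat) (P : 'M[F]_m.+1).
Hypothesis hP : P \in unitmx.

Lemma conjM X Y : (P *m X *m invmx P) *m (P *m Y *m invmx P) = P *m (X *m Y) *m invmx P.
Proof. by rewrite !mulmxA -(mulmxA _ (invmx P) P) mulVmx // mulmx1. Qed.

Lemma conjK X : invmx P *m (P *m X *m invmx P) *m P = X.
Proof. by rewrite !mulmxA mulVmx // mul1mx -mulmxA mulVmx // mulmx1. Qed.

Lemma unconj x : P *m (invmx P *m x *m P) *m invmx P = x.
Proof. by rewrite !mulmxA mulmxV // mul1mx -mulmxA mulmxV // mulmx1. Qed.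

Lemma conj0 X : P *m X *m invmx P = 0 -> X = 0.
Proof. by move=> h; rewrite -(conjK X) h mulmx0 mul0mx. Qed.

Lemma trconj X : \tr (P *m X *m invmx P) = \tr X.
Proof. by rewrite mxtrace_mulC mulmxA mulVmx // mul1mx. Qed.
End Conj.

Theorem theorem2p1 (F : fieldType) (n r : nat)
  (P : 'M[F]_n.+1) (A : 'M[int]_(n.+1, r))
  (hP : P \in unitmx)
  (hA : exists C : 'M[int]_(n.+1, r), C^T *m A = 1%:M)
  (c : 'rV[rat]_r)
  (hf : forall w, is_weight A w -> w != 0 -> fval c w != 0)
  (t : 'rV[F]_r) (ht : forall j, t 0 j != 0)
  (hLam : forall e : 'M[F]_n.+1, wproj P A 0 e = e -> e *m e = e -> e != 0 ->
          \tr (torus_elt P A t *m e) != 0)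
  (V : {vspace 'M[F]_n.+1})
  (hV : forall x, x \in V -> \tr (torus_elt P A t *m x) = 0)
  (hV0 : forall x, x \in V -> \tr (torus_elt P A t *m wproj P A 0 x) = 0)
  (hVW : forall w w', Wplus A c w -> Wplus A c w' ->
          forall x y, x \in V -> y \in V ->
          wproj P A w x *m wproj P A (- w') y = 0) :
  mathieu_subspace (fun x : 'M[F]_n.+1 => x \in V).
Proof.
move=> a b c0 ha.
have [N [e [eV [ee e0]]]] := nil_or_idem ha.
suff ez : e = 0.
  have aN := e0 ez; exists N => m hm.
  by rewrite -(subnK hm) exprD aN !mulr0 mul0r mem0v.
pose Dl : 'M[F]_n.+1 := diag_mx (\row_i \prod_(j < r) (t 0 j) ^ (A i j)).
have hTe : torus_elt P A t = P *m Dl *m invmx P by [].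
have wprojE : forall w x, wproj P A w x = P *m msk A w (invmx P *m x *m P) *m invmx P by [].
pose E := invmx P *m e *m P.
suff : E = 0 by move=> h; rewrite -(unconj hP e) -/E h mulmx0 mul0mx.
apply: (coordB hf (Dl := Dl)).
- rewrite /E !mulmxA -(mulmxA (invmx P *m e) P (invmx P)) mulmxV // mulmx1.
  by rewrite -(mulmxA (invmx P) e e) mulmxE ee.
- move=> w w' hw hw'; apply: (conj0 hP); rewrite -conjM //.
  by rewrite -!wprojE; apply: hVW.
- move=> X hX; apply/matrixP => i j; rewrite mul_diag_mx mul_mx_diag !mxE.
  case: (eqVneq (row i A) (row j A)) => h; last by rewrite hX // mulr0 mul0r.
  rewrite mulrC; congr (_ * _); apply: eq_bigr => k _.
  by have := congr1 (fun M : 'rV[int]_r => M 0 k) h; rewrite !mxE => ->.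
- have := hV0 e eV; rewrite hTe wprojE conjM // trconj //.
- move=> X hX hXX hX0.
  have := hLam (P *m X *m invmx P).
  rewrite hTe !conjM // trconj //; apply.
  + by rewrite wprojE conjK // bd_mskK.
  + by rewrite hXX.
  + by apply: contra hX0 => /eqP /(conj0 hP) ->.
Qed.
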